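(* Let $d\ge3$, $\Omega=\{1,\ldots,d\}$, and $F\le F'\le\mathrm{Sym}(\Omega)$ with $F'$ preserving the orbits of $F$, and suppose $F'$ acts 2-transitively on $\Omega$. Then $G(F,F')$ acts transitively on geodesic segments of any fixed finite length in $T$: for any two geodesic segments $[x_1,x_n]$ and $[x_1',x_n']$ in $T$ (with consecutive vertices $x_1,\ldots,x_n$ and $x_1',\ldots,x_n'$) there exists $g\in G(F,F')$ with $g(x_i)=x_i'$ for all $i$.
   Context: Let $T=\mathcal{T}_d$ be the $d$-regular tree with a fixed edge coloring $c\colon E(T)\to\Omega$ whose restriction $c_v$ to the edges $E(v)$ at each vertex $v$ is a bijection onto $\Omega$. For $g\in\mathrm{Aut}(T)$, $\sigma(g,v)=c_{gv}\circ g_v\circ c_v^{-1}$ with $g_v\colon E(v)\to E(gv)$ induced by $g$. $U(F')=\{g:\sigma(g,v)\in F'\ \forall v\}$, $G(F)=\{g:\sigma(g,v)\in F$ for all but finitely many $v\}$, $G(F,F')=G(F)\cap U(F')$. *)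

(* Defs.v *)
From mathcomp Require Import all_boot all_fingroup.
Set Implicit Arguments. Unset Strict Implicit. Unset Printing Implicit Defensive.

(* Model of the d-regular tree T_d with its legal edge colouring:
   vertices = reduced words over Omega = 'I_d (no two consecutive letters equal),
   edges = {w, rcons w a}, the edge {w, rcons w a} having colour a.
   Every vertex has exactly one incident edge of each colour. *)

Definition reduced (d : nat) (s : seq 'I_d) : bool := sorted (fun a b => a != b) s.

Definition vert (d : nat) := {s : seq 'I_d | reduced s}.

Definition col (d : nat) (u w : vert d) (a : 'I_d) : Prop :=
  val w = rcons (val u) a \/ val u = rcons (val w) a.

Definition adj (d : nat) (u w : vert d) : Prop := exists a, col u w a.

Definition is_aut (d : nat) (g : vert d -> vert d) : Prop :=
  bijective g /\ forall u w, adj u w <-> adj (g u) (g w).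

(* sigma(g,v) lies in the permutation group P: the local action
   c_{gv} o g_v o c_v^{-1} is (the function of) an element of P. *)
Definition sigma_in (d : nat) (g : vert d -> vert d) (v : vert d)
  (P : {set {perm 'I_d}}) : Prop :=
  exists2 p, p \in P & forall a w, col v w a -> col (g v) (g w) (p a).

Definition in_U (d : nat) (F' : {set {perm 'I_d}}) (g : vert d -> vert d) : Prop :=
  is_aut g /\ forall v, sigma_in g v F'.

Definition in_G (d : nat) (F : {set {perm 'I_d}}) (g : vert d -> vert d) : Prop :=
  is_aut g /\ exists S : seq (vert d), forall v, ~ sigma_in g v F -> v \in S.

Definition in_GFF (d : nat) (F F' : {set {perm 'I_d}}) (g : vert d -> vert d) : Prop :=
  in_G F g /\ in_U F' g.

Fixpoint walk (d : nat) (s : seq (vert d)) : Prop :=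
  match s with
  | x :: ((y :: _) as t) => adj x y /\ walk t
  | _ => True
  end.

Definition geodesic (d : nat) (s : seq (vert d)) : Prop :=
  exists x0 xs, s = x0 :: xs /\ walk s /\
    forall t, walk t -> forall y0 ys, t = y0 :: ys -> y0 = x0 ->
      last y0 ys = last x0 xs -> size s <= size t.

Definition preserves_orbits (d : nat) (F F' : {set {perm 'I_d}}) : Prop :=
  forall p x, p \in F' -> p x \in orbit 'P F x.

Definition two_transitive (d : nat) (P : {set {perm 'I_d}}) : Prop :=
  forall x y x' y' : 'I_d, x != y -> x' != y' ->
    exists2 p, p \in P & p x = x' /\ p y = y'.

(* Main.v *)
Require Import Defs.
From mathcomp Require Import all_boot all_fingroup zify.
From Stdlib Require Import Classical ClassicalEpsilon.
Set Implicit Arguments. Unset Strict Implicit. Unset Printing Implicit Defensive.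

Section Basics.
Variable d : nat.
Implicit Types (w : seq 'I_d) (a b c : 'I_d).

Definition colS w1 w2 a := w2 = rcons w1 a \/ w1 = rcons w2 a.

Lemma red_nil : reduced ([::] : seq 'I_d). Proof. by []. Qed.
Lemma red1 a : reduced [:: a]. Proof. by []. Qed.

Lemma red_rcons2 w a b :
  reduced (rcons (rcons w b) a) = reduced (rcons w b) && (b != a).
Proof.
case: w => [|y w] //=; rewrite /reduced /=.
  by rewrite andbT.
by rewrite rcons_path last_rcons.
Qed.

Lemma red_rcons w a : reduced (rcons w a) -> reduced w.
Proof.
case/lastP: w => [|w b] //; rewrite red_rcons2; by case/andP.
Qed.

Lemma red_cons x w : reduced (x :: w) -> reduced w.
Proof. by case: w => //= y w /andP[]. Qed.

Lemma red_take w k : reduced w -> reduced (take k w).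
Proof. exact: take_sorted. Qed.

Lemma red_nth x0 w k : reduced w -> k.+1 < size w -> nth x0 w k != nth x0 w k.+1.
Proof. by move/(sortedP x0) => H /H. Qed.

Definition Lc c w : seq 'I_d :=
  if w is x :: w' then (if x == c then w' else c :: w) else [:: c].

Lemma Lc_red c w : reduced w -> reduced (Lc c w).
Proof.
case: w => [|x w] //= Hr; case: ifP => [_|/negbT hx]; first exact: red_cons Hr.
by rewrite /reduced /= eq_sym hx.
Qed.

Lemma LcK c w : reduced w -> Lc c (Lc c w) = w.
Proof.
case: w => [|x w] /=; first by rewrite eqxx.
case: ifP => [/eqP -> | hx] Hr /=; last by rewrite eqxx.
case: w Hr => [|y w] //= /andP[hy _]; by rewrite eq_sym (negbTE hy).
Qed.

Lemma Lc_col c w1 w2 a : colS w1 w2 a -> colS (Lc c w1) (Lc c w2) a.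
Proof.
have key : forall v, colS (Lc c v) (Lc c (rcons v a)) a.
  case=> [|x v] /=.
    by case: ifP => [/eqP -> | _]; [right | left].
  by case: ifP => _; left.
case=> ->; first exact: key.
case: (key w2) => h; [right|left]; exact: h.
Qed.

End Basics.


Section Comp.
Variable d : nat.
Variables F F' : {group {perm 'I_d}}.

Definition Lv c (v : vert d) : vert d := exist _ (Lc c (val v)) (Lc_red c (valP v)).

Lemma LvK c : involutive (Lv c).
Proof. move=> v; apply: val_inj => /=; exact: LcK (valP v). Qed.

Lemma Lv_col c u w a : col u w a -> col (Lv c u) (Lv c w) a.
Proof. exact: Lc_col. Qed.

Lemma Lv_adj c u w : adj u w -> adj (Lv c u) (Lv c w).
Proof. by case=> a h; exists a; apply: Lv_col. Qed.

Lemma Lv_GFF c : in_GFF F F' (Lv c).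
Proof.
have aut : is_aut (Lv c).
  split; first by exists (Lv c); apply: LvK.
  move=> u w; split; first exact: Lv_adj.
  by move/(Lv_adj c); rewrite !LvK.
have sig1 : forall (P : {group {perm 'I_d}}) v, sigma_in (Lv c) v P.
  by move=> P v; exists 1%g; rewrite ?group1 // => a w h; rewrite perm1; apply: Lv_col.
split; split => //; by exists [::] => v []; apply: sig1.
Qed.

Lemma id_GFF : in_GFF F F' id.
Proof.
have aut : is_aut (@id (vert d)) by split; [exists id | ].
have sig1 : forall (P : {group {perm 'I_d}}) v, sigma_in id v P.
  by move=> P v; exists 1%g; rewrite ?group1 // => a w h; rewrite perm1.
split; split => //; by exists [::] => v []; apply: sig1.
Qed.

Lemma sigma_comp (P : {group {perm 'I_d}}) (g1 g2 : vert d -> vert d) v :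
  sigma_in g1 v P -> sigma_in g2 (g1 v) P -> sigma_in (fun x => g2 (g1 x)) v P.
Proof.
case=> p1 h1 e1 [p2 h2 e2]; exists (p1 * p2)%g; first exact: groupM.
by move=> a w /e1 /e2; rewrite permM.
Qed.

Lemma aut_comp (g1 g2 : vert d -> vert d) : is_aut g1 -> is_aut g2 -> is_aut (fun x => g2 (g1 x)).
Proof.
case=> b1 a1 [b2 a2]; split; first exact: (bij_comp b2 b1).
by move=> u w; rewrite a1 a2.
Qed.

Lemma GFF_comp (g1 g2 : vert d -> vert d) : in_GFF F F' g1 -> in_GFF F F' g2 ->
  in_GFF F F' (fun x => g2 (g1 x)).
Proof.
case=> [[A1 [S1 H1]] [_ U1]] [[A2 [S2 H2]] [_ U2]].
have A := aut_comp A1 A2.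
split; split => //; last by move=> v; apply: sigma_comp.
case: A1 => [[g1i g1K _] _].
exists (S1 ++ map g1i S2) => v hv; rewrite mem_cat.
case: (boolP (v \in S1)) => //= hS1.
have s1 : sigma_in g1 v F by apply: NNPP => /H1; rewrite (negbTE hS1).
  case: (boolP (g1 v \in S2)) => [hS2|hS2].
  by have := map_f g1i hS2; rewrite g1K.
have s2 : sigma_in g2 (g1 v) F by apply: NNPP => /H2; rewrite (negbTE hS2).
by case: hv; apply: sigma_comp.
Qed.

Definition Tf (s : seq 'I_d) (v : vert d) : vert d := foldl (fun v c => Lv c v) v s.
Definition Tr (s : seq 'I_d) (v : vert d) : vert d := foldr (fun c v => Lv c v) v s.

Lemma TrTf s v : Tr s (Tf s v) = v.
Proof. by elim: s v => //= c s IH v; rewrite IH LvK. Qed.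

Lemma TfTr s v : Tf s (Tr s v) = v.
Proof. by elim: s v => //= c s IH v; rewrite LvK IH. Qed.

Lemma Tf_GFF s : in_GFF F F' (Tf s).
Proof.
elim: s => [|c s IH]; first exact: id_GFF.
exact: (GFF_comp (Lv_GFF c) IH).
Qed.

Lemma Tr_GFF s : in_GFF F F' (Tr s).
Proof.
elim: s => [|c s IH]; first exact: id_GFF.
exact: (GFF_comp IH (Lv_GFF c)).
Qed.

Lemma Tf_self (v : vert d) : val (Tf (val v) v) = [::].
Proof.
case: v => s hs /=; rewrite /Tf.
have : forall (v : vert d), val v = s -> val (foldl (fun v c => Lv c v) v s) = [::].
  elim: s {hs} => [|c s IH] v hv //=.
  by apply: IH => /=; rewrite hv /= eqxx.
by apply; rewrite /=.
Qed.

End Comp.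


Section Rooted.
Variable d : nat.
Variables F F' : {group {perm 'I_d}}.
Hypothesis hFF' : F \subset F'.
Hypothesis hpo : preserves_orbits F F'.
Hypothesis h2t : two_transitive F'.
Hypothesis hd : 2 <= d.
Variable x0 : 'I_d.
Variables u u' : seq 'I_d.
Hypothesis hu : reduced u.
Hypothesis hu' : reduced u'.
Hypothesis hsz : size u = size u'.

Local Notation m := (size u).

Definition ch (w : seq 'I_d) (a : 'I_d) (p : {perm 'I_d}) : {perm 'I_d} :=
  let k := (size w).+1 in
  if (k < m) && (rcons w a == take k u) then
    odflt 1%g [pick q in F' | (q a == p a) && (q (nth x0 u k) == nth x0 u' k)]
  else odflt 1%g [pick q in F | q a == p a].

Definition tau0 : {perm 'I_d} := odflt 1%g [pick q in F' | q (nth x0 u 0) == nth x0 u' 0].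

Fixpoint taur (r : seq 'I_d) : {perm 'I_d} :=
  if r is a :: r' then ch (rev r') a (taur r') else tau0.

Definition tau w := taur (rev w).

Lemma tau_rcons w a : tau (rcons w a) = ch w a (tau w).
Proof. by rewrite /tau rev_rcons /= revK. Qed.

Fixpoint Hr (r : seq 'I_d) : seq 'I_d :=
  if r is a :: r' then rcons (Hr r') (taur r' a) else [::].

Definition H w := Hr (rev w).

Lemma H_rcons w a : H (rcons w a) = rcons (H w) (tau w a).
Proof. by rewrite /H /tau rev_rcons. Qed.

Lemma H_nil : H [::] = [::]. Proof. by []. Qed.

Lemma tau_F' w : tau w \in F'.
Proof.
case/lastP: w => [|w a]; rewrite ?tau_rcons /tau /= /tau0 /ch.
  by case: pickP => [q /andP[]|] //=; rewrite group1.
case: ifP => _; case: pickP => [q|] /=; rewrite ?group1 //.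
  by case/andP.
by case/andP=> hq _; apply: (subsetP hFF').
Qed.

Lemma tau_F w : tau w \notin F -> exists2 k, k <= m & w = take k u.
Proof.
case/lastP: w => [|w a]; first by exists 0; rewrite ?take0.
rewrite tau_rcons /ch; case: ifP => [/andP[hk /eqP ->] _|_].
  by exists (size w).+1; [apply: ltnW|].
by case: pickP => [q /andP[hq _]|] /=; rewrite ?group1 // hq.
Qed.

Lemma exists_neq (x : 'I_d) : exists y : 'I_d, y != x.
Proof.
have h0 : 0 < d by apply: leq_trans hd.
case: (boolP (x == Ordinal h0)) => [/eqP ->|hx]; last by exists (Ordinal h0); rewrite eq_sym.
by exists (Ordinal hd).
Qed.

Lemma tau_path k : k < m -> tau (take k u) (nth x0 u k) = nth x0 u' k.
Proof.
elim: k => [|k IH] hk.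
  rewrite take0 /tau /= /tau0; case: pickP => [q /andP[_ /eqP -> //]|hn] /=.
  have [y hy] := exists_neq (nth x0 u 0); have [y' hy'] := exists_neq (nth x0 u' 0).
  have hy1 : nth x0 u 0 != y by rewrite eq_sym.
  have hy2 : nth x0 u' 0 != y' by rewrite eq_sym.
  have [p hp [e1 _]] := h2t hy1 hy2.
  by have := hn p; rewrite /= hp e1 eqxx.
have hk' : k < m by apply: ltnW.
rewrite (take_nth x0 hk') tau_rcons /ch size_takel ?(ltnW hk') // hk -(take_nth x0 hk') eqxx /=.
case: pickP => [q /and3P[_ _ /eqP -> //]|hn] /=.
have n1 := red_nth x0 hu hk.
have n2 : nth x0 u' k != nth x0 u' k.+1 by apply: red_nth; rewrite // -hsz.
rewrite -(IH hk') in n2.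
have [p hp [e1 e2]] := h2t n1 n2.
by have := hn p; rewrite /= hp e1 e2 !eqxx.
Qed.

Lemma tau_compat w a : tau (rcons w a) a = tau w a.
Proof.
rewrite tau_rcons /ch; case: ifP => [/andP[hk /eqP he]|_].
  case: pickP => [q /and3P[_ /eqP -> _ //]|hn] /=.
  have hw : size w < m by apply: ltnW.
  move: he; rewrite (take_nth x0 hw) => /rcons_inj [hw' ha].
  have n1 := red_nth x0 hu hk.
  have n2 : nth x0 u' (size w) != nth x0 u' (size w).+1 by apply: red_nth; rewrite // -hsz.
  rewrite -(tau_path hw) -hw' -ha in n2; rewrite -ha in n1.
  have [p hp [e1 e2]] := h2t n1 n2.
  by have := hn p; rewrite /= hp e1 e2 !eqxx.
case: pickP => [q /andP[_ /eqP -> //]|hn] /=.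
have /orbitP [q hq e] := hpo a (tau_F' w).
by have := hn q; rewrite /= hq -e /= eqxx.
Qed.


Lemma H_size w : size (H w) = size w.
Proof. by elim/last_ind: w => // w a IH; rewrite H_rcons !size_rcons IH. Qed.

Lemma H_red w : reduced w -> reduced (H w).
Proof.
elim/last_ind: w => // w a IH hr; rewrite H_rcons.
case/lastP: w IH hr => [|w b] IH hr //.
rewrite red_rcons2 in hr; case/andP: hr => hr hba.
rewrite H_rcons red_rcons2 -H_rcons IH //=.
by rewrite -(tau_compat w b) (inj_eq perm_inj).
Qed.

Lemma H_inj : injective H.
Proof.
move=> w1; elim/last_ind: w1 => [|w1 a1 IH] w2.
  by case/lastP: w2 => // w2 a2; rewrite H_rcons H_nil => /(congr1 size); rewrite size_rcons.
case/lastP: w2 => [|w2 a2]; first by rewrite H_rcons H_nil => /(congr1 size); rewrite size_rcons.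
rewrite !H_rcons => /rcons_inj [/IH e1 e2]; subst w2.
by rewrite (perm_inj e2).
Qed.

Lemma H_surj v : reduced v -> exists2 w, reduced w & H w = v.
Proof.
elim/last_ind: v => [|v b IH] hr; first by exists [::].
have [w hw ew] := IH (red_rcons hr).
exists (rcons w ((tau w)^-1 b)%g); last by rewrite H_rcons ew permKV.
case/lastP: w hw ew => [|w c] hw ew //.
rewrite red_rcons2 hw /=; apply/negP => /eqP ec.
move: hr; rewrite -ew H_rcons red_rcons2 -H_rcons => /andP[_].
have eb : tau (rcons w c) c = b by rewrite {2}ec permKV.
by rewrite -(tau_compat w c) eb eqxx.
Qed.

Lemma H_take k : k <= m -> H (take k u) = take k u'.
Proof.
elim: k => [|k IH] hk; first by rewrite !take0.
rewrite (take_nth x0 hk) H_rcons IH ?(ltnW hk) // tau_path //.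
by rewrite -take_nth // -hsz.
Qed.

Definition hv (v : vert d) : vert d := exist _ (H (val v)) (H_red (valP v)).

Lemma hv_col v w a : col v w a -> col (hv v) (hv w) (tau (val v) a).
Proof.
case=> e; [left|right]; rewrite /= e H_rcons //.
by rewrite tau_compat.
Qed.

Lemma bij_of (T : Type) (f : T -> T) : injective f -> (forall y, exists x, f x = y) -> bijective f.
Proof.
move=> fi fs.
pose g y := proj1_sig (constructive_indefinite_description _ (fs y)).
have gK : cancel g f by move=> y; rewrite /g; case: constructive_indefinite_description.
by exists g => // x; apply: fi; rewrite gK.
Qed.

Lemma hv_aut : is_aut hv.
Proof.
split.
  apply: bij_of.
    by move=> v w /(congr1 val) /= /H_inj /val_inj.
  move=> y; have [w hw ew] := H_surj (valP y).
  by exists (exist _ w hw); apply: val_inj.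
move=> v w; split; first by case=> a /hv_col h; eexists; exact: h.
case=> c; rewrite /col /=.
have key : forall v w : vert d, H (val w) = rcons (H (val v)) c -> adj v w.
  move=> v1 w1 e.
  have : 0 < size (H (val w1)) by rewrite e size_rcons.
  rewrite H_size; case/lastP ew: (val w1) => [|w' a] // _.
  move: e; rewrite ew H_rcons => /rcons_inj [/H_inj e _].
  by exists a; left; rewrite ew e.
case=> [/key //|/key h].
by case: h => a [e|e]; exists a; [right|left].
Qed.

Lemma hv_GFF : in_GFF F F' hv.
Proof.
split; split; try exact: hv_aut.
  exists (pmap insub [seq take k u | k <- iota 0 m.+1]) => v hv'.
  rewrite mem_pmap_sub; case: (boolP (tau (val v) \in F)) => hF.
    by case: hv'; exists (tau (val v)) => // a w; apply: hv_col.
  have [k hk ->] := tau_F hF; apply/mapP; exists k => //.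
  by rewrite mem_iota add0n ltnS.
by move=> v; exists (tau (val v)); [exact: tau_F' | move=> a w; apply: hv_col].
Qed.

End Rooted.


Section Geo.
Variable d : nat.
Variable x0 : 'I_d.

Lemma col_size (u w : vert d) a : col u w a ->
  size (val w) = (size (val u)).+1 \/ size (val u) = (size (val w)).+1.
Proof. by case=> ->; rewrite size_rcons; [left|right]. Qed.

Lemma walk_size (t : seq (vert d)) v : walk (v :: t) ->
  size (val (last v t)) <= size (val v) + size t.
Proof.
elim: t v => [|w t IH] v /=; first by rewrite addn0.
case=> [[a /col_size hc] hw]; have := IH w hw.
by case: hc => ->; rewrite addnS // => h; apply: (leq_trans h); rewrite addSn ?addnS // leqW.
Qed.

Lemma walk_exact (t : seq (vert d)) v : walk (v :: t) ->
  size (val (last v t)) = size (val v) + size t ->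
  map val (v :: t) = [seq take k (val (last v t)) | k <- iota (size (val v)) (size t).+1].
Proof.
elim: t v => [|w t IH] v; first by rewrite /= addn0 take_size.
case=> [[a hc] hw] e; rewrite [last _ _]/= in e *.
have hs := walk_size hw.
have sw : size (val w) = (size (val v)).+1.
  case: (col_size hc) => // h; move: hs e h; rewrite /=; lia.
have e' : size (val (last w t)) = size (val w) + size t by move: e; rewrite sw /=; lia.
have IHw := IH w hw e'.
rewrite map_cons IHw sw; congr (_ :: _).
move: IHw; rewrite sw /= => [[hw0 _]].
case: hc => hc; last by move: sw; rewrite hc size_rcons; lia.
by rewrite -(take_takel _ (leqnSn (size (val v)))) -hw0 hc -cats1 takel_cat // take_size.
Qed.

Definition pv (V : vert d) k : vert d := exist _ (take k (val V)) (red_take k (valP V)).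

Lemma walk_pref (V : vert d) n i : i + n <= size (val V) ->
  walk [seq pv V k | k <- iota i n.+1].
Proof.
elim: n i => [|n IH] i //= h.
split; last by apply: (IH i.+1); rewrite addSn -addnS.
exists (nth x0 (val V) i); left; rewrite /= -take_nth //.
by apply: leq_trans h; rewrite addnS ltnS leq_addr.
Qed.

Lemma last_pref (V : vert d) n i :
  last (pv V i) [seq pv V k | k <- iota i.+1 n] = pv V (i + n).
Proof. by elim: n i => [|n IH] i /=; rewrite ?addn0 // IH addnS. Qed.

Lemma geo_root (x : vert d) ys : val x = [::] -> geodesic (x :: ys) ->
  map val (x :: ys) = [seq take k (val (last x ys)) | k <- iota 0 (size ys).+1]
  /\ size (val (last x ys)) = size ys.
Proof.
move=> hx [y0 [ys0 [[<- <-] [hw hm]]]].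
set V := last x ys.
have h1 := walk_size hw; rewrite hx /= in h1.
have h2 := hm _ (walk_pref (V:=V) (n:=size (val V)) (i:=0) (leqnn _)) (pv V 0) [seq pv V k | k <- iota 1 (size (val V))] erefl.
have e2 : size (val V) = size ys.
  apply/eqP; rewrite eqn_leq h1 /= -ltnS.
  move: h2; rewrite last_pref add0n size_map size_iota; apply.
    by apply: val_inj; rewrite /= hx take0.
  by apply: val_inj; rewrite /= take_size.
have := walk_exact hw; rewrite hx /= e2 => /(_ erefl) ->.
by split.
Qed.

Lemma walk_map (g : vert d -> vert d) s : (forall u w, adj u w -> adj (g u) (g w)) ->
  walk s -> walk (map g s).
Proof.
move=> hg; elim: s => [|x [|y s] IH] //= [h1 h2]; split; first exact: hg.
exact: IH.
Qed.

Lemma geo_map (g h : vert d -> vert d) xs :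
  (forall u w, adj u w -> adj (g u) (g w)) -> (forall u w, adj u w -> adj (h u) (h w)) ->
  cancel g h -> geodesic xs -> geodesic (map g xs).
Proof.
move=> hg hh gK [x [ys [-> [hw hm]]]].
exists (g x), (map g ys); split => //; split; first exact: (walk_map hg hw).
move=> t ht y0 ys2 et ey el.
have := hm (map h t) (walk_map hh ht) (h y0) (map h ys2); rewrite et /= size_map.
move=> H; rewrite size_map; apply: H => //; first by rewrite ey gK.
by rewrite last_map el last_map gK.
Qed.

End Geo.


Lemma GFF_adj d (F F' : {group {perm 'I_d}}) g : in_GFF F F' g ->
  forall u w, adj u w -> adj (g u) (g w).
Proof. by case=> [[[_ h] _] _] u w /h. Qed.

Theorem mainTheorem7 (d : nat) (F F' : {group {perm 'I_d}}) :
  3 <= d ->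
  F \subset F' ->
  preserves_orbits F F' ->
  two_transitive F' ->
  forall (n : nat) (xs xs' : seq (vert d)),
    size xs = n -> size xs' = n ->
    geodesic xs -> geodesic xs' ->
    exists g : vert d -> vert d, in_GFF F F' g /\ map g xs = xs'.
Proof.
move=> hd3 hFF' hpo h2t n xs xs' sx sx' gx gx'.
have hd : 1 < d by apply: leq_trans hd3.
have h0 : 0 < d by apply: leq_trans hd.
pose x0 : 'I_d := Ordinal h0.
have [x [ys [exs _]]] := gx.
have [x' [ys' [exs' _]]] := gx'.
pose T := Tf (val x). pose T' := Tf (val x').
have gz : geodesic (map T xs).
  apply: (geo_map (h := Tr (val x))); [exact: GFF_adj (Tf_GFF F F' _) | exact: GFF_adj (Tr_GFF F F' _) | exact: TrTf | exact: gx].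
have gz' : geodesic (map T' xs').
  apply: (geo_map (h := Tr (val x'))); [exact: GFF_adj (Tf_GFF F F' _) | exact: GFF_adj (Tr_GFF F F' _) | exact: TrTf | exact: gx'].
rewrite exs /= in gz; rewrite exs' /= in gz'.
have [ez sz] := geo_root x0 (Tf_self x) gz.
have [ez' sz'] := geo_root x0 (Tf_self x') gz'.
set U := val (last (T x) (map T ys)) in ez sz.
set U' := val (last (T' x') (map T' ys')) in ez' sz'.
have hsz : size U = size U'.
  rewrite sz sz' !size_map; move: sx sx'; rewrite exs exs' /=; lia.
have hU : reduced U := valP _.
have hU' : reduced U' := valP _.
pose h := hv hFF' hpo h2t hd x0 hU hU' hsz.
exists (fun v => Tr (val x') (h (T v))); split.
  apply: GFF_comp; last exact: Tr_GFF.
  apply: GFF_comp; first exact: Tf_GFF.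
  exact: hv_GFF.
have hm : map h (T x :: map T ys) = T' x' :: map T' ys'.
  apply: (inj_map val_inj).
  rewrite ez'; move: ez; rewrite -!map_comp /comp => ez.
  have -> : [seq val (h x1) | x1 <- T x :: map T ys] = map (H F F' x0 U U') (map val (T x :: map T ys)).
    by rewrite -map_comp.
  rewrite ez -map_comp -sz -sz' -hsz.
  apply/eq_in_map => k; rewrite mem_iota add0n ltnS => hk /=.
  exact: H_take.
transitivity (map (Tr (val x')) (map h (map T xs))); first by rewrite -!map_comp.
rewrite exs [map T _]map_cons hm.
have -> : T' x' :: map T' ys' = map T' xs' by rewrite exs'.
by rewrite -map_comp (eq_map (TrTf (val x'))) map_id.
Qed.
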